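(* Let $k$ be a finite field and $r\ge2$. Every axiom of the series $\Phi7$ is true in the free metabelian Lie algebra $F_r$.
   Context: Products are left-normed. $F_n$ is the free metabelian Lie algebra over $k$ of rank $n$ with free base $a_1,\dots,a_n$; $\mathrm{Fit}(F_n)=F_n^2$ is a module over $R_n=k[x_1,\dots,x_n]$ via $u\cdot x_i=ua_i$. $y\cdot f(x_1,\dots,x_n)$ is the Lie term where monomial $x_{i_1}\cdots x_{i_t}$ acts by $y\mapsto yx_{i_1}\cdots x_{i_t}$, extended linearly. Let $\mathrm{Fit}(x)\equiv\forall y\,(xyx=0)$ and $\varphi(x_1..x_n)\equiv\bigwedge_{(\alpha_i)\in k^n\setminus\{0\}}\neg\mathrm{Fit}(\sum\alpha_ix_i)$. The series $\Phi7$: for every $n\le r$ and every finite system $S$: $y_1f_{i1}+\dots+y_lf_{il}=c_i$ ($i=1..m$, $f_{ij}\in R_n$, $c_i\in\mathrm{Fit}(F_n)$) that has no solution in the localisation $\mathrm{Fit}(F_n)_\Delta=(R_n\setminus\Delta)^{-1}\mathrm{Fit}(F_n)$, $\Delta=(x_1,\dots,x_n)$, the sentence $\forall x_1..x_n\forall y_1..y_l\,\big(\varphi(x_1..x_n)\wedge\bigwedge_{j=1}^l\bigwedge_{i=1}^ny_jx_iy_j=0\to\bigvee_{i=1}^m h_i\ne0\big)$, where $h_i=\sum_jy_j\cdot f_{ij}(x_1..x_n)-c_i(x_1..x_n)$ and $c_i(x_1..x_n)$ is a Lie polynomial representing $c_i$ with each $a_j$ replaced by $x_j$. *)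

(* Defs.v *)
From HB Require Import structures.
From mathcomp Require Import all_boot all_order all_algebra.
From mathcomp Require Import mpoly.

Set Implicit Arguments.
Unset Strict Implicit.
Unset Printing Implicit Defensive.

Import GRing.Theory.
Local Open Scope ring_scope.

(* LBr a b is the product  a b  (products are left-normed).            *)
Inductive lterm (k : Type) (V : Type) : Type :=
| LVar   of V
| LZero
| LAdd   of lterm k V & lterm k V
| LScale of k & lterm k V
| LBr    of lterm k V & lterm k V.

Arguments LZero {k V}.
Arguments LVar {k V} _.
Arguments LAdd {k V} _ _.
Arguments LScale {k V} _ _.
Arguments LBr {k V} _ _.

Section Terms.
Variables (k : fieldType).

(* The identities of metabelian Lie algebras over k.  [eqv] is the smallest
   congruence on terms containing all instances of the k-vector-space axioms,
   bilinearity, anticommutativity (aa = 0), the Jacobi identity and the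
   metabelian identity (ab)(cd) = 0.  Terms over V modulo [eqv] form the free
   metabelian Lie algebra over k with free base V.                          *)
Inductive eqv {V : Type} : lterm k V -> lterm k V -> Prop :=
| eqv_refl a : eqv a a
| eqv_sym a b : eqv a b -> eqv b a
| eqv_trans a b c : eqv a b -> eqv b c -> eqv a c
| eqv_add a a' b b' : eqv a a' -> eqv b b' -> eqv (LAdd a b) (LAdd a' b')
| eqv_scale c a a' : eqv a a' -> eqv (LScale c a) (LScale c a')
| eqv_br a a' b b' : eqv a a' -> eqv b b' -> eqv (LBr a b) (LBr a' b')
| eqv_addA a b c : eqv (LAdd a (LAdd b c)) (LAdd (LAdd a b) c)
| eqv_addC a b : eqv (LAdd a b) (LAdd b a)
| eqv_add0 a : eqv (LAdd LZero a) a
| eqv_addN a : eqv (LAdd a (LScale (-1) a)) LZero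
| eqv_scaleA c d a : eqv (LScale c (LScale d a)) (LScale (c * d) a)
| eqv_scale1 a : eqv (LScale 1 a) a
| eqv_scaleDr c a b : eqv (LScale c (LAdd a b)) (LAdd (LScale c a) (LScale c b))
| eqv_scaleDl c d a : eqv (LScale (c + d) a) (LAdd (LScale c a) (LScale d a))
| eqv_brDl a b c : eqv (LBr (LAdd a b) c) (LAdd (LBr a c) (LBr b c))
| eqv_brDr a b c : eqv (LBr a (LAdd b c)) (LAdd (LBr a b) (LBr a c))
| eqv_brZl s a b : eqv (LBr (LScale s a) b) (LScale s (LBr a b))
| eqv_brZr s a b : eqv (LBr a (LScale s b)) (LScale s (LBr a b))
| eqv_alt a : eqv (LBr a a) LZero
| eqv_jacobi a b c :
    eqv (LAdd (LAdd (LBr (LBr a b) c) (LBr (LBr b c) a)) (LBr (LBr c a) b)) LZero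
| eqv_metab a b c d : eqv (LBr (LBr a b) (LBr c d)) LZero.

Definition lsum {V} (s : seq (lterm k V)) : lterm k V := foldr (@LAdd k V) LZero s.
Definition lsub {V} (a b : lterm k V) : lterm k V := LAdd a (LScale (-1) b).

Fixpoint lsubst {V W} (x : V -> lterm k W) (t : lterm k V) : lterm k W :=
  match t with
  | LVar v => x v
  | LZero => LZero
  | LAdd a b => LAdd (lsubst x a) (lsubst x b)
  | LScale c a => LScale c (lsubst x a)
  | LBr a b => LBr (lsubst x a) (lsubst x b)
  end.

(* F^2 : the span of all products (scalar multiples of products are products) *)
Definition in_sq {V} (t : lterm k V) : Prop :=
  exists ps : seq (lterm k V * lterm k V), eqv t (lsum [seq LBr p.1 p.2 | p <- ps]).

(* y . x^mm  :  y x_1 ... x_1 x_2 ... x_n  (x_i repeated mm_i times) *)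
Definition act_mono {V} n (x : 'I_n -> lterm k V) (y : lterm k V) (mm : 'X_{1..n})
  : lterm k V :=
  foldl (fun acc i => iter (mm i) (fun z => LBr z (x i)) acc) y (enum 'I_n).

Definition pact {V} n (x : 'I_n -> lterm k V) (y : lterm k V) (f : {mpoly k[n]})
  : lterm k V :=
  lsum [seq LScale (f@_mm) (act_mono x y mm) | mm <- msupp f].

Definition gens n : 'I_n -> lterm k 'I_n := fun i => LVar i.

Definition in_Delta n (p : {mpoly k[n]}) : Prop :=
  exists g : 'I_n -> {mpoly k[n]}, p = \sum_(i < n) g i * 'X_i.

Definition sys_lhs {V} n l m (f : 'I_m -> 'I_l -> {mpoly k[n]})
  (x : 'I_n -> lterm k V) (y : 'I_l -> lterm k V) (i : 'I_m) : lterm k V :=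
  lsum [seq pact x (y j) (f i j) | j <- enum 'I_l].

(* The system  y_1 f_i1 + ... + y_l f_il = c_i  (i < m) has a solution in the
   localisation Fit(F_n)_Delta = (R_n \ Delta)^{-1} Fit(F_n).  Writing the
   unknowns over a common denominator y_j = u_j / s (u_j in Fit(F_n),
   s not in Delta), the equation  (sum_j u_j f_ij)/s = c_i/1  in the
   localisation means  t (sum_j u_j f_ij - s c_i) = 0  in Fit(F_n) for some
   t not in Delta.                                                         *)
Definition loc_solvable n l m (f : 'I_m -> 'I_l -> {mpoly k[n]})
  (c : 'I_m -> lterm k 'I_n) : Prop :=
  exists (s t : {mpoly k[n]}) (u : 'I_l -> lterm k 'I_n),
    ~ in_Delta s /\ ~ in_Delta t /\ (forall j, in_sq (u j)) /\
    forall i : 'I_m,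
      eqv (pact (@gens n) (lsub (sys_lhs f (@gens n) u i) (pact (@gens n) (c i) s)) t)
          LZero.

Definition FitF r (z : lterm k 'I_r) : Prop :=
  forall w : lterm k 'I_r, eqv (LBr (LBr z w) z) LZero.

Definition phiF r n (x : 'I_n -> lterm k 'I_r) : Prop :=
  forall alpha : 'I_n -> k, (exists i, alpha i != 0) ->
    ~ FitF (lsum [seq LScale (alpha i) (x i) | i <- enum 'I_n]).

Definition Phi7_sentence_holds r n l m (f : 'I_m -> 'I_l -> {mpoly k[n]})
  (c : 'I_m -> lterm k 'I_n) : Prop :=
  forall (x : 'I_n -> lterm k 'I_r) (y : 'I_l -> lterm k 'I_r),
    phiF x ->
    (forall (j : 'I_l) (i : 'I_n), eqv (LBr (LBr (y j) (x i)) (y j)) LZero) ->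
    exists i : 'I_m, ~ eqv (lsub (sys_lhs f x y i) (lsubst x (c i))) LZero.

End Terms.

(* Main.v *)
From HB Require Import structures.
Require Import Defs.
From mathcomp Require Import all_boot all_order all_algebra.
From mathcomp Require Import mpoly.
From mathcomp Require Import boolp.

Set Implicit Arguments.
Unset Strict Implicit.
Unset Printing Implicit Defensive.
Import GRing.Theory.
Local Open Scope ring_scope.

Section Quot.
Variables (k : fieldType) (V : Type).

Definition LL := {P : lterm k V -> Prop | exists t, P = eqv t}.
Definition pi (t : lterm k V) : LL := exist _ (eqv t) (ex_intro _ t erefl).

Lemma pi_eq a b : pi a = pi b <-> eqv a b.
Proof.
split.
  move=> /(congr1 (@proj1_sig _ _)) /= e.
  have : eqv b b by apply: eqv_refl.
  by rewrite -e.
move=> ab; apply: eq_exist; apply: funext => x; apply: propext; split => h.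
  exact: eqv_trans (eqv_sym ab) h.
exact: eqv_trans ab h.
Qed.

Definition rep (q : LL) : lterm k V := projT1 (cid (proj2_sig q)).

Lemma repK q : pi (rep q) = q.
Proof.
rewrite /rep; case: (cid _) => t /= e.
case: q e => P hP /= e; apply: eq_exist; by rewrite e.
Qed.

Lemma rep_pi t : eqv (rep (pi t)) t.
Proof. by apply/pi_eq; rewrite repK. Qed.

Lemma LLind (P : LL -> Prop) : (forall t, P (pi t)) -> forall q, P q.
Proof. by move=> h q; rewrite -(repK q). Qed.

HB.instance Definition _ := gen_eqMixin LL.
HB.instance Definition _ := gen_choiceMixin LL.

Fact lkey : unit. Proof. by []. Qed.
Definition ladd := locked_with lkey (fun (a b : LL) => pi (LAdd (rep a) (rep b))).
Definition lopp := locked_with lkey (fun (a : LL) => pi (LScale (-1) (rep a))).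
Definition lzero := pi LZero.
Definition lscale := locked_with lkey (fun (c : k) (a : LL) => pi (LScale c (rep a))).
Definition lbr := locked_with lkey (fun (a b : LL) => pi (LBr (rep a) (rep b))).

Lemma pi_add a b : pi (LAdd a b) = ladd (pi a) (pi b).
Proof. rewrite /ladd unlock; apply/pi_eq; apply: eqv_add; apply: eqv_sym; apply: rep_pi. Qed.
Lemma pi_opp a : pi (LScale (-1) a) = lopp (pi a).
Proof. rewrite /lopp unlock; apply/pi_eq; apply: eqv_scale; apply: eqv_sym; apply: rep_pi. Qed.
Lemma pi_scale c a : pi (LScale c a) = lscale c (pi a).
Proof. rewrite /lscale unlock; apply/pi_eq; apply: eqv_scale; apply: eqv_sym; apply: rep_pi. Qed.
Lemma pi_br a b : pi (LBr a b) = lbr (pi a) (pi b).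
Proof. rewrite /lbr unlock; apply/pi_eq; apply: eqv_br; apply: eqv_sym; apply: rep_pi. Qed.

Lemma laddA : associative ladd.
Proof.
elim/LLind=> a; elim/LLind=> b; elim/LLind=> c.
rewrite -!pi_add; apply/pi_eq; exact: eqv_addA.
Qed.
Lemma laddC : commutative ladd.
Proof. elim/LLind=> a; elim/LLind=> b; rewrite -!pi_add; apply/pi_eq; exact: eqv_addC. Qed.
Lemma ladd0 : left_id lzero ladd.
Proof. elim/LLind=> a; rewrite -!pi_add; apply/pi_eq; exact: eqv_add0. Qed.
Lemma laddN : left_inverse lzero lopp ladd.
Proof.
elim/LLind=> a; rewrite -pi_opp -!pi_add; apply/pi_eq.
exact: eqv_trans (eqv_addC _ _) (eqv_addN _).
Qed.

HB.instance Definition _ := GRing.isZmodule.Build LL laddA laddC ladd0 laddN.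

Lemma piD0 a b : pi (LAdd a b) = pi a + pi b. Proof. exact: pi_add. Qed.

Lemma lscaleA a b v : lscale a (lscale b v) = lscale (a * b) v.
Proof. elim/LLind: v => v; rewrite -!pi_scale; apply/pi_eq; exact: eqv_scaleA. Qed.
Lemma lscale1 : left_id 1 lscale.
Proof. elim/LLind=> v; rewrite -!pi_scale; apply/pi_eq; exact: eqv_scale1. Qed.
Lemma lscaleDr : right_distributive lscale +%R.
Proof.
move=> c; elim/LLind=> a; elim/LLind=> b.
have e : forall x y : LL, x + y = ladd x y by [].
rewrite !e -pi_add -!pi_scale -pi_add; apply/pi_eq; exact: eqv_scaleDr.
Qed.
Lemma lscaleDl v : {morph lscale^~ v: a b / a + b}.
Proof.
elim/LLind: v => v a b /=.
have e : forall x y : LL, x + y = ladd x y by [].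
rewrite !e -!pi_scale -pi_add; apply/pi_eq; exact: eqv_scaleDl.
Qed.

HB.instance Definition _ := GRing.Zmodule_isLmodule.Build k LL lscaleA lscale1 lscaleDr lscaleDl.

Lemma piD a b : pi (LAdd a b) = pi a + pi b. Proof. exact: pi_add. Qed.
Lemma piZ c a : pi (LScale c a) = c *: pi a. Proof. exact: pi_scale. Qed.
Lemma pi0 : pi LZero = 0. Proof. by []. Qed.

Lemma brDl a b c : lbr (a + b) c = lbr a c + lbr b c.
Proof.
move: a b c; elim/LLind=> a; elim/LLind=> b; elim/LLind=> c.
rewrite -!pi_br -!piD -!pi_br; apply/pi_eq; exact: eqv_brDl.
Qed.
Lemma brDr a b c : lbr a (b + c) = lbr a b + lbr a c.
Proof.
move: a b c; elim/LLind=> a; elim/LLind=> b; elim/LLind=> c.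
rewrite -!pi_br -!piD -!pi_br; apply/pi_eq; exact: eqv_brDr.
Qed.
Lemma brZl s a b : lbr (s *: a) b = s *: lbr a b.
Proof.
move: a b; elim/LLind=> a; elim/LLind=> b.
rewrite -!pi_br -!piZ -!pi_br; apply/pi_eq; exact: eqv_brZl.
Qed.
Lemma brZr s a b : lbr a (s *: b) = s *: lbr a b.
Proof.
move: a b; elim/LLind=> a; elim/LLind=> b.
rewrite -!pi_br -!piZ -!pi_br; apply/pi_eq; exact: eqv_brZr.
Qed.
Lemma brr a : lbr a a = 0.
Proof. elim/LLind: a => a; rewrite -pi_br -pi0; apply/pi_eq; exact: eqv_alt. Qed.
Lemma br_jacobi a b c : lbr (lbr a b) c + lbr (lbr b c) a + lbr (lbr c a) b = 0.
Proof.
move: a b c; elim/LLind=> a; elim/LLind=> b; elim/LLind=> c.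
rewrite -!pi_br -!piD -pi0; apply/pi_eq; exact: eqv_jacobi.
Qed.
Lemma br_metab a b c d : lbr (lbr a b) (lbr c d) = 0.
Proof.
move: a b c d; elim/LLind=> a; elim/LLind=> b; elim/LLind=> c; elim/LLind=> d.
rewrite -!pi_br -pi0; apply/pi_eq; exact: eqv_metab.
Qed.

Lemma br0l a : lbr 0 a = 0.
Proof. apply: (@addIr _ (lbr 0 a)); by rewrite -brDl !add0r. Qed.
Lemma br0r a : lbr a 0 = 0.
Proof. apply: (@addIr _ (lbr a 0)); by rewrite -brDr !add0r. Qed.
Lemma brNl a b : lbr (- a) b = - lbr a b.
Proof. by rewrite -scaleN1r brZl scaleN1r. Qed.
Lemma brNr a b : lbr a (- b) = - lbr a b.
Proof. by rewrite -scaleN1r brZr scaleN1r. Qed.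
Lemma brBl a b c : lbr (a - b) c = lbr a c - lbr b c.
Proof. by rewrite brDl brNl. Qed.
Lemma brBr a b c : lbr a (b - c) = lbr a b - lbr a c.
Proof. by rewrite brDr brNr. Qed.
Lemma brC a b : lbr a b = - lbr b a.
Proof.
apply/eqP; rewrite -subr_eq0 opprK; have := brr (a + b).
by rewrite brDl !brDr !brr add0r addr0 => ->.
Qed.
Lemma br_suml I (s : seq I) (P : pred I) (F : I -> LL) b :
  lbr (\sum_(i <- s | P i) F i) b = \sum_(i <- s | P i) lbr (F i) b.
Proof. by apply: (big_morph (lbr^~ b)) => [x y|]; rewrite ?brDl ?br0l. Qed.
Lemma br_sumr I (s : seq I) (P : pred I) (F : I -> LL) b :
  lbr b (\sum_(i <- s | P i) F i) = \sum_(i <- s | P i) lbr b (F i).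
Proof. by apply: (big_morph (lbr b)) => [x y|]; rewrite ?brDr ?br0r. Qed.

Definition sqP (q : LL) := exists ps : seq (LL * LL), q = \sum_(p <- ps) lbr p.1 p.2.

Lemma sq0 : sqP 0. Proof. by exists [::]; rewrite big_nil. Qed.
Lemma sq_br a b : sqP (lbr a b). Proof. by exists [:: (a, b)]; rewrite big_seq1. Qed.
Lemma sqD a b : sqP a -> sqP b -> sqP (a + b).
Proof. by move=> [p ->] [q ->]; exists (p ++ q); rewrite big_cat. Qed.
Lemma sqZ c a : sqP a -> sqP (c *: a).
Proof.
move=> [p ->]; exists [seq (c *: x.1, x.2) | x <- p].
by rewrite big_map scaler_sumr; apply: eq_bigr => x _; rewrite brZl.
Qed.
Lemma sqN a : sqP a -> sqP (- a).
Proof. by move=> h; rewrite -scaleN1r; apply: sqZ. Qed.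
Lemma sqB a b : sqP a -> sqP b -> sqP (a - b).
Proof. by move=> ha hb; apply: sqD => //; apply: sqN. Qed.
Lemma sq_sum I (s : seq I) (P : pred I) (F : I -> LL) :
  (forall i, P i -> sqP (F i)) -> sqP (\sum_(i <- s | P i) F i).
Proof.
move=> h; elim/big_rec: _ => [|i x Pi hx]; first exact: sq0.
by apply: sqD => //; apply: h.
Qed.
Lemma metab a b : sqP a -> sqP b -> lbr a b = 0.
Proof.
move=> [p ->] [q ->]; rewrite br_suml big1 // => x _.
by rewrite br_sumr big1 // => y _; rewrite br_metab.
Qed.
Lemma br_sq_comm u a b : sqP u -> lbr (lbr u a) b = lbr (lbr u b) a.
Proof.
move=> hu; have := br_jacobi u a b.
rewrite (brC (lbr a b)) (metab hu (sq_br a b)) oppr0 addr0.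
rewrite (brC b u) brNl => /eqP; rewrite subr_eq0 => /eqP //.
Qed.


Lemma pi_lsum (s : seq (lterm k V)) : pi (lsum s) = \sum_(t <- s) pi t.
Proof. by elim: s => [|t s IH] /=; rewrite ?big_nil ?big_cons // piD IH. Qed.
Lemma pi_lsub a b : pi (lsub a b) = pi a - pi b.
Proof. by rewrite /lsub piD piZ scaleN1r. Qed.

End Quot.

Arguments pi {k V}.
Arguments lbr {k V}.

Section Hom.
Variables (k : fieldType).

Lemma eqv_subst V W (s : V -> lterm k W) a b : eqv a b -> eqv (lsubst s a) (lsubst s b).
Proof.
elim => /=; intros; try (by constructor); try (by econstructor; eauto).
Qed.

Lemma subst_ext V W (s s' : V -> lterm k W) t :
  (forall v, eqv (s v) (s' v)) -> eqv (lsubst s t) (lsubst s' t).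
Proof.
move=> h; elim: t => /= [v||a IHa b IHb|c a IH|a IHa b IHb]; try exact: h;
  try (by constructor); by constructor.
Qed.

Definition homL V W (x : V -> LL k W) (q : LL k V) : LL k W :=
  pi (lsubst (fun v => rep (x v)) (rep q)).

Lemma homL_pi V W (x : V -> LL k W) t : homL x (pi t) = pi (lsubst (fun v => rep (x v)) t).
Proof. apply/pi_eq; apply: eqv_subst; exact: rep_pi. Qed.

Lemma pi_subst V W (x : V -> lterm k W) t :
  pi (lsubst x t) = homL (fun v => pi (x v)) (pi t).
Proof. rewrite homL_pi; apply/pi_eq; apply: subst_ext => v; apply: eqv_sym; exact: rep_pi. Qed.

Variables (V W : Type) (x : V -> LL k W).

Lemma homD a b : homL x (a + b) = homL x a + homL x b.
Proof. move: a b; elim/LLind=> a; elim/LLind=> b; by rewrite -piD !homL_pi /= piD. Qed.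
Lemma homZ c a : homL x (c *: a) = c *: homL x a.
Proof. move: a; elim/LLind=> a; by rewrite -piZ !homL_pi /= piZ. Qed.
Lemma hom0 : homL x 0 = 0.
Proof. by rewrite -(pi0 k V) homL_pi. Qed.
Lemma homN a : homL x (- a) = - homL x a.
Proof. by rewrite -scaleN1r homZ scaleN1r. Qed.
Lemma homB a b : homL x (a - b) = homL x a - homL x b.
Proof. by rewrite homD homN. Qed.
Lemma homBr a b : homL x (lbr a b) = lbr (homL x a) (homL x b).
Proof. move: a b; elim/LLind=> a; elim/LLind=> b; by rewrite -pi_br !homL_pi /= pi_br. Qed.
Lemma homV v : homL x (pi (LVar v)) = x v.
Proof. by rewrite homL_pi /= repK. Qed.
Lemma hom_sum I (s : seq I) (P : pred I) (F : I -> LL k V) :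
  homL x (\sum_(i <- s | P i) F i) = \sum_(i <- s | P i) homL x (F i).
Proof. by apply: (big_morph (homL x)) => [a b|]; rewrite ?homD ?hom0. Qed.
Lemma hom_sq a : sqP a -> sqP (homL x a).
Proof.
move=> [p ->]; rewrite hom_sum; apply: sq_sum => i _; rewrite homBr; exact: sq_br.
Qed.

End Hom.

Lemma hom_comp (k : fieldType) U V W (s : V -> LL k W) (x : U -> LL k V) q :
  homL s (homL x q) = homL (fun v => homL s (x v)) q.
Proof.
elim/LLind: q => t; elim: t => [v||a IHa b IHb|c a IH|a IHa b IHb].
- by rewrite !homV.
- by rewrite pi0 !hom0.
- by rewrite piD !homD IHa IHb.
- by rewrite piZ !homZ IH.
- by rewrite pi_br !homBr IHa IHb.
Qed.

Section Act.
Variables (k : fieldType) (W : Type) (n : nat).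
Local Notation L := (LL k W).
Implicit Types (x : 'I_n -> L) (u v : L) (m : 'X_{1..n}) (p q : {mpoly k[n]}).

Definition Eop (c : L) (z : L) := lbr z c.
Definition amS x u m (s : seq 'I_n) :=
  foldl (fun acc i => iter (m i) (Eop (x i)) acc) u s.
Definition am x u m := amS x u m (enum 'I_n).
Definition actL x u p := \sum_(m <- msupp p) p@_m *: am x u m.

Lemma iterE_add c j u v : iter j (Eop c) (u + v) = iter j (Eop c) u + iter j (Eop c) v.
Proof. by elim: j => //= j ->; rewrite /Eop brDl. Qed.
Lemma iterE_scale c j a u : iter j (Eop c) (a *: u) = a *: iter j (Eop c) u.
Proof. by elim: j => //= j ->; rewrite /Eop brZl. Qed.
Lemma iterE_0 c j : iter j (Eop c) 0 = 0.
Proof. by elim: j => //= j ->; rewrite /Eop br0l. Qed.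
Lemma iterE_sq c j u : sqP u -> sqP (iter j (Eop c) u).
Proof. by case: j => //= j _; exact: sq_br. Qed.

Lemma amSD x m s u v : amS x (u + v) m s = amS x u m s + amS x v m s.
Proof. by elim: s u v => //= i s IH u v; rewrite iterE_add IH. Qed.
Lemma amSZ x m s a u : amS x (a *: u) m s = a *: amS x u m s.
Proof. by elim: s u => //= i s IH u; rewrite iterE_scale IH. Qed.
Lemma amS0 x m s : amS x 0 m s = 0.
Proof. by elim: s => //= i s IH; rewrite iterE_0 IH. Qed.
Lemma amS_sq x m s u : sqP u -> sqP (amS x u m s).
Proof. by elim: s u => //= i s IH u hu; apply: IH; apply: iterE_sq. Qed.

Lemma amD x m u v : am x (u + v) m = am x u m + am x v m. Proof. exact: amSD. Qed.
Lemma amZ x m a u : am x (a *: u) m = a *: am x u m. Proof. exact: amSZ. Qed.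
Lemma am0 x m : am x 0 m = 0. Proof. exact: amS0. Qed.
Lemma am_sq x m u : sqP u -> sqP (am x u m). Proof. exact: amS_sq. Qed.

Lemma actL_sup x u p (s : seq 'X_{1..n}) : uniq s -> {subset msupp p <= s} ->
  actL x u p = \sum_(m <- s) p@_m *: am x u m.
Proof.
move=> us sub; rewrite (bigID (fun m => m \in msupp p)) /=.
rewrite [X in _ + X]big1 ?addr0; last first.
  by move=> m /memN_msupp_eq0 ->; rewrite scale0r.
rewrite -big_filter /actL; apply: perm_big.
apply: uniq_perm; rewrite ?filter_uniq ?msupp_uniq //.
move=> m; rewrite mem_filter; apply/idP/andP => [h|[]//]; split => //; exact: sub.
Qed.

Lemma actDp x u p q : actL x u (p + q) = actL x u p + actL x u q.
Proof.
set s := undup (msupp p ++ msupp q ++ msupp (p + q)).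
have us : uniq s by apply: undup_uniq.
rewrite !(@actL_sup _ _ _ s) //; last 3 first.
- by move=> m hm; rewrite mem_undup !mem_cat hm ?orbT.
- by move=> m hm; rewrite mem_undup !mem_cat hm ?orbT.
- by move=> m hm; rewrite mem_undup !mem_cat hm ?orbT.
by rewrite -big_split; apply: eq_bigr => m _; rewrite mcoeffD scalerDl.
Qed.
Lemma actZp x u a p : actL x u (a *: p) = a *: actL x u p.
Proof.
set s := undup (msupp p ++ msupp (a *: p)).
have us : uniq s by apply: undup_uniq.
rewrite !(@actL_sup _ _ _ s) //; last 2 first.
- by move=> m hm; rewrite mem_undup !mem_cat hm ?orbT.
- by move=> m hm; rewrite mem_undup !mem_cat hm ?orbT.
by rewrite scaler_sumr; apply: eq_bigr => m _; rewrite mcoeffZ scalerA.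
Qed.
Lemma act0p x u : actL x u 0 = 0.
Proof. by rewrite /actL msupp0 big_nil. Qed.
Lemma actNp x u p : actL x u (- p) = - actL x u p.
Proof. by rewrite -scaleN1r actZp scaleN1r. Qed.
Lemma actBp x u p q : actL x u (p - q) = actL x u p - actL x u q.
Proof. by rewrite actDp actNp. Qed.
Lemma act_sump x u I (r : seq I) (P : pred I) (F : I -> {mpoly k[n]}) :
  actL x u (\sum_(i <- r | P i) F i) = \sum_(i <- r | P i) actL x u (F i).
Proof. by apply: (big_morph (actL x u)) => [a b|]; rewrite ?actDp ?act0p. Qed.
Lemma actXm x u m : actL x u 'X_[m] = am x u m.
Proof. by rewrite /actL msuppX big_seq1 mcoeffX eqxx scale1r. Qed.

Lemma actDu x u v p : actL x (u + v) p = actL x u p + actL x v p.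
Proof. by rewrite /actL -big_split; apply: eq_bigr => m _; rewrite amD scalerDr. Qed.
Lemma actZu x a u p : actL x (a *: u) p = a *: actL x u p.
Proof.
rewrite /actL scaler_sumr; apply: eq_bigr => m _; by rewrite amZ !scalerA mulrC.
Qed.
Lemma act0u x p : actL x 0 p = 0.
Proof. by rewrite /actL big1 // => m _; rewrite am0 scaler0. Qed.
Lemma actNu x u p : actL x (- u) p = - actL x u p.
Proof. by rewrite -scaleN1r actZu scaleN1r. Qed.
Lemma act_sumu x p I (r : seq I) (P : pred I) (F : I -> L) :
  actL x (\sum_(i <- r | P i) F i) p = \sum_(i <- r | P i) actL x (F i) p.
Proof. by apply: (big_morph (actL x ^~ p)) => [a b|]; rewrite ?actDu ?act0u. Qed.
Lemma act_sq x u p : sqP u -> sqP (actL x u p).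
Proof. move=> hu; apply: sq_sum => m _; apply: sqZ; exact: am_sq. Qed.

Lemma amS_zero x u m s : (forall i, i \in s -> m i = 0%N) -> amS x u m s = u.
Proof. by elim: s u => //= i s IH u h; rewrite h ?mem_head //= IH // => j js; rewrite h // inE js orbT. Qed.

Lemma am0m x u : am x u 0%MM = u.
Proof. by apply: amS_zero => i _; rewrite mnm0E. Qed.

Lemma act1 x u : actL x u 1 = u.
Proof. by rewrite -mpolyX0 actXm am0m. Qed.

Lemma am1 x u a : am x u U_(a)%MM = lbr u (x a).
Proof.
rewrite /am; have : a \in enum 'I_n by rewrite mem_enum.
have : uniq (enum 'I_n) by apply: enum_uniq.
elim: (enum 'I_n) u => //= i s IH u /andP [nis us].
rewrite inE; case: (eqVneq a i) => [ai _|ai /= /IH -> //]; first subst i.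
  rewrite mnm1E eqxx /= amS_zero // => j js; rewrite mnm1E.
  by case: (eqVneq a j) => // aj; subst j; rewrite js in nis.
by rewrite mnm1E (negPf ai).
Qed.

Lemma actX1 x u a : actL x u 'X_a = lbr u (x a).
Proof. by rewrite actXm am1. Qed.

Lemma iterE_br c j u d : sqP u -> iter j (Eop c) (lbr u d) = lbr (iter j (Eop c) u) d.
Proof.
move=> hu; elim: j => //= j ->; rewrite /Eop br_sq_comm //.
exact: iterE_sq.
Qed.
Lemma amS_br x m s u d : sqP u -> amS x (lbr u d) m s = lbr (amS x u m s) d.
Proof.
elim: s u => //= i s IH u hu; rewrite iterE_br // IH //; exact: iterE_sq.
Qed.
Lemma amS_iter x m s u j c : sqP u ->
  amS x (iter j (Eop c) u) m s = iter j (Eop c) (amS x u m s).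
Proof.
move=> hu; elim: j => //= j IH; rewrite /Eop amS_br ?IH //; exact: iterE_sq.
Qed.
Lemma amS_comm x m1 m2 s u : sqP u -> amS x (amS x u m1 s) m2 s = amS x u (m1 + m2) s.
Proof.
elim: s u => //= i s IH u hu.
rewrite -amS_iter; last exact: iterE_sq.
rewrite IH; last by apply: iterE_sq; apply: iterE_sq.
by rewrite mnmDE addnC iterD.
Qed.

Lemma act_mul x u p q : sqP u -> actL x (actL x u p) q = actL x u (p * q).
Proof.
move=> hu.
have hX : forall m q, actL x (am x u m) q = actL x u ('X_[m] * q).
  move=> m q'; have -> : actL x u ('X_[m] * q') =
      actL x u ('X_[m] * \sum_(m' <- msupp q') q'@_m' *: 'X_[m']) by rewrite -mpolyE.
  rewrite [in LHS](mpolyE q') act_sump mulr_sumr act_sump; apply: eq_bigr => m' _.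
  rewrite actZp -scalerAr actZp actXm -mpolyXD actXm; congr (_ *: _).
  exact: amS_comm.
have -> : actL x u (p * q) = actL x u ((\sum_(m <- msupp p) p@_m *: 'X_[m]) * q)
  by rewrite -mpolyE.
rewrite [actL x u p]/actL act_sumu mulr_suml act_sump; apply: eq_bigr => m _.
by rewrite actZu -scalerAl actZp hX.
Qed.

Lemma am_sqdiff x y u m : (forall i, sqP (x i - y i)) -> sqP u -> am x u m = am y u m.
Proof.
move=> hxy; rewrite /am; elim: (enum 'I_n) u => //= i s IH u hu.
have -> : iter (m i) (Eop (x i)) u = iter (m i) (Eop (y i)) u.
  elim: (m i) => //= j ->; rewrite /Eop.
  have -> : x i = y i + (x i - y i) by rewrite addrC subrK.
  by rewrite brDr (metab (iterE_sq _ _ hu) (hxy i)) addr0.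
by apply: IH; apply: iterE_sq.
Qed.
Lemma act_sqdiff x y u p : (forall i, sqP (x i - y i)) -> sqP u -> actL x u p = actL y u p.
Proof. by move=> h hu; apply: eq_bigr => m _; rewrite (am_sqdiff _ h hu). Qed.

End Act.

Section PiAct.
Variables (k : fieldType) (V : Type) (n : nat).

Lemma pi_iter (c t : lterm k V) j :
  pi (iter j (fun z => LBr z c) t) = iter j (Eop (pi c)) (pi t).
Proof. by elim: j => //= j IH; rewrite pi_br IH. Qed.

Lemma pi_act_mono (x : 'I_n -> lterm k V) y m :
  pi (act_mono x y m) = am (fun i => pi (x i)) (pi y) m.
Proof.
rewrite /act_mono /am /amS; elim: (enum 'I_n) y => //= i s IH y.
by rewrite IH pi_iter.
Qed.

Lemma pi_pact (x : 'I_n -> lterm k V) y f :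
  pi (pact x y f) = actL (fun i => pi (x i)) (pi y) f.
Proof.
rewrite /pact pi_lsum big_map /actL; apply: eq_bigr => m _.
by rewrite piZ pi_act_mono.
Qed.

Lemma pi_sys_lhs l m (f : 'I_m -> 'I_l -> {mpoly k[n]}) (x : 'I_n -> lterm k V)
  (y : 'I_l -> lterm k V) i :
  pi (sys_lhs f x y i) = \sum_(j <- enum 'I_l) actL (fun i => pi (x i)) (pi (y j)) (f i j).
Proof. by rewrite /sys_lhs pi_lsum big_map; apply: eq_bigr => j _; rewrite pi_pact. Qed.

Variables (W : Type) (s : V -> LL k W).

Lemma hom_am (x : 'I_n -> LL k V) u m :
  homL s (am x u m) = am (fun i => homL s (x i)) (homL s u) m.
Proof.
rewrite /am /amS; elim: (enum 'I_n) u => //= i r IH u.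
rewrite IH; congr amS; elim: (m i) => //= j IHj; by rewrite /Eop homBr IHj.
Qed.

Lemma hom_act (x : 'I_n -> LL k V) u p :
  homL s (actL x u p) = actL (fun i => homL s (x i)) (homL s u) p.
Proof. by rewrite /actL hom_sum; apply: eq_bigr => m _; rewrite homZ hom_am. Qed.

End PiAct.

From mathcomp Require Import ring.

Section Lin.
Variables (k : fieldType) (n : nat).
Local Notation L := (LL k 'I_n).

Fixpoint linT (w : 'I_n) (t : lterm k 'I_n) : k :=
  match t with
  | LVar v => (v == w)%:R
  | LZero => 0
  | LAdd a b => linT w a + linT w b
  | LScale c a => c * linT w a
  | LBr _ _ => 0
  end.

Lemma linT_eqv a b : eqv a b -> forall w, linT w a = linT w b.
Proof.
elim => /=; intros; try ring; try congruence.
Qed.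

Definition gen (i : 'I_n) : L := pi (LVar i).
Definition actG (u : L) (p : {mpoly k[n]}) := actL gen u p.

Lemma sum_delta (v : 'I_n) : \sum_w (v == w)%:R *: gen w = gen v.
Proof.
rewrite (bigD1 v) //= eqxx scale1r big1 ?addr0 // => w /negPf.
by rewrite eq_sym => ->; rewrite scale0r.
Qed.

Definition gg (j : 'I_(n * n).+1) : L :=
  if (insub (j %/ n)%N : option 'I_n) is Some a then
    (if (insub (j %% n)%N : option 'I_n) is Some b then lbr (gen a) (gen b) else 0)
  else 0.

Lemma gg_sq j : sqP (gg j).
Proof.
rewrite /gg; case: (insub _) => [a|]; last exact: sq0.
case: (insub _) => [b|]; [exact: sq_br | exact: sq0].
Qed.

Lemma gg_br a b : exists j, gg j = lbr (gen a) (gen b).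
Proof.
have n0 : (0 < n)%N by apply: leq_ltn_trans (ltn_ord a).
have hj : (a * n + b < (n * n).+1)%N.
  apply: leq_trans (leqnSn _); apply: (@leq_trans ((a.+1) * n)).
    by rewrite mulSn addnC ltn_add2r.
  by rewrite leq_mul2r ltn_ord orbT.
exists (Ordinal hj); rewrite /gg /=.
rewrite divnMDl // divn_small // addn0 modnMDl modn_small //.
by rewrite !valK.
Qed.

Definition GF (q : L) := exists P : 'I_(n * n).+1 -> {mpoly k[n]},
  q = \sum_j actG (gg j) (P j).

Lemma GF_sq q : GF q -> sqP q.
Proof. move=> [P ->]; apply: sq_sum => j _; apply: act_sq; exact: gg_sq. Qed.

Lemma GF0 : GF 0.
Proof. by exists (fun _ => 0); rewrite big1 // => j _; rewrite /actG act0p. Qed.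
Lemma GFD a b : GF a -> GF b -> GF (a + b).
Proof.
move=> [P ->] [Q ->]; exists (fun j => P j + Q j).
by rewrite -big_split; apply: eq_bigr => j _; rewrite /actG actDp.
Qed.
Lemma GFZ c a : GF a -> GF (c *: a).
Proof.
move=> [P ->]; exists (fun j => c *: P j).
by rewrite scaler_sumr; apply: eq_bigr => j _; rewrite /actG actZp.
Qed.
Lemma GFN a : GF a -> GF (- a).
Proof. by move=> h; rewrite -scaleN1r; apply: GFZ. Qed.
Lemma GFB a b : GF a -> GF b -> GF (a - b).
Proof. by move=> ha hb; apply: GFD => //; apply: GFN. Qed.
Lemma GF_sum I (r : seq I) (P : pred I) (F : I -> L) :
  (forall i, P i -> GF (F i)) -> GF (\sum_(i <- r | P i) F i).
Proof.
move=> h; elim/big_rec: _ => [|i x Pi hx]; first exact: GF0.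
by apply: GFD => //; apply: h.
Qed.
Lemma GFact a p : GF a -> GF (actG a p).
Proof.
move=> [P ->]; exists (fun j => P j * p).
rewrite /actG act_sumu; apply: eq_bigr => j _; rewrite act_mul //; exact: gg_sq.
Qed.
Lemma GF_brr a b : GF a -> GF (lbr a (gen b)).
Proof. by move=> h; rewrite -actX1; apply: GFact. Qed.
Lemma GF_brl a b : GF a -> GF (lbr (gen b) a).
Proof. by move=> h; rewrite brC; apply: GFN; apply: GF_brr. Qed.
Lemma GF_gen2 a b : GF (lbr (gen a) (gen b)).
Proof.
have [j <-] := gg_br a b; exists (fun i => (j == i)%:R).
rewrite (bigD1 j) //= eqxx /actG act1 big1 ?addr0 // => i /negPf.
by rewrite eq_sym => ->; rewrite act0p.
Qed.

Lemma nfGF t : GF (pi t - \sum_w linT w t *: gen w).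
Proof.
elim: t => [v||a IHa b IHb|c a IH|a IHa b IHb] /=.
- by rewrite sum_delta subrr; exact: GF0.
- rewrite pi0 big1 ?subrr; [exact: GF0| by move=> w _; rewrite scale0r].
- have -> : pi (LAdd a b) - \sum_w (linT w a + linT w b) *: gen w =
     (pi a - \sum_w linT w a *: gen w) + (pi b - \sum_w linT w b *: gen w).
    rewrite piD; under eq_bigr do rewrite scalerDl.
    by rewrite big_split /= opprD addrACA.
  exact: GFD.
- have -> : pi (LScale c a) - \sum_w (c * linT w a) *: gen w =
     c *: (pi a - \sum_w linT w a *: gen w).
    rewrite piZ scalerBr scaler_sumr; congr (_ - _); apply: eq_bigr => w _.
    by rewrite scalerA.
  exact: GFZ.
- rewrite big1; last by move=> w _; rewrite scale0r.
  rewrite subr0 pi_br.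
  set A := \sum_w linT w a *: gen w in IHa *; set B := \sum_w linT w b *: gen w in IHb *.
  have -> : lbr (pi a) (pi b) = lbr (A + (pi a - A)) (B + (pi b - B)).
    by rewrite [A + _]addrC subrK [B + _]addrC subrK.
  move: (pi a - A) (pi b - B) IHa IHb => Ga Gb IHa IHb.
  rewrite brDl !brDr (metab (GF_sq IHa) (GF_sq IHb)) addr0.
  apply: GFD; first apply: GFD.
  + rewrite /A br_suml; apply: GF_sum => w _; rewrite brZl; apply: GFZ.
    rewrite /B br_sumr; apply: GF_sum => w' _; rewrite brZr; apply: GFZ.
    exact: GF_gen2.
  + rewrite /A br_suml; apply: GF_sum => w _; rewrite brZl; apply: GFZ.
    exact: GF_brl.
  + rewrite /B br_sumr; apply: GF_sum => w _; rewrite brZr; apply: GFZ.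
    exact: GF_brr.
Qed.

Definition linL (q : L) w := linT w (rep q).
Lemma linL_pi t w : linL (pi t) w = linT w t.
Proof. by apply: linT_eqv; exact: rep_pi. Qed.
Lemma linLD a b w : linL (a + b) w = linL a w + linL b w.
Proof. by move: a b; elim/LLind=> a; elim/LLind=> b; rewrite -piD !linL_pi. Qed.
Lemma linLZ c a w : linL (c *: a) w = c * linL a w.
Proof. by move: a; elim/LLind=> a; rewrite -piZ !linL_pi. Qed.
Lemma linL0 w : linL 0 w = 0.
Proof. by rewrite -(pi0 k 'I_n) linL_pi. Qed.
Lemma linLbr a b w : linL (lbr a b) w = 0.
Proof. by move: a b; elim/LLind=> a; elim/LLind=> b; rewrite -pi_br !linL_pi. Qed.
Lemma linL_sum I (r : seq I) (P : pred I) (F : I -> L) w :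
  linL (\sum_(i <- r | P i) F i) w = \sum_(i <- r | P i) linL (F i) w.
Proof. by apply: (big_morph (linL ^~ w)) => [a b|]; rewrite ?linLD ?linL0. Qed.
Lemma linL_sq q w : sqP q -> linL q w = 0.
Proof. by move=> [p ->]; rewrite linL_sum big1 // => i _; rewrite linLbr. Qed.

Lemma nfL q : GF (q - \sum_w linL q w *: gen w).
Proof. by elim/LLind: q => t; under eq_bigr do rewrite linL_pi; exact: nfGF. Qed.

Lemma sq_lin0 q : (forall w, linL q w = 0) -> sqP q.
Proof.
move=> h; have := GF_sq (nfL q); rewrite big1 ?subr0 // => w _.
by rewrite h scale0r.
Qed.
Lemma sq_GF q : sqP q -> GF q.
Proof.
move=> h; have := nfL q; rewrite big1 ?subr0 // => w _.
by rewrite linL_sq // scale0r.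
Qed.

End Lin.

Section Model.
Variables (k : fieldType) (V : Type).
Record m4 := M4 { c1 : k; c2 : k; c3 : k; c4 : k }.
Definition madd a b := M4 (c1 a + c1 b) (c2 a + c2 b) (c3 a + c3 b) (c4 a + c4 b).
Definition mscale c a := M4 (c * c1 a) (c * c2 a) (c * c3 a) (c * c4 a).
Definition mzero := M4 0 0 0 0.
Definition mbr a b := M4 0 0 (c1 a * c2 b - c2 a * c1 b) (c3 a * c1 b - c1 a * c3 b).

Fixpoint evalT (e : V -> m4) (t : lterm k V) : m4 :=
  match t with
  | LVar v => e v
  | LZero => mzero
  | LAdd a b => madd (evalT e a) (evalT e b)
  | LScale c a => mscale c (evalT e a)
  | LBr a b => mbr (evalT e a) (evalT e b)
  end.

Lemma evalT_eqv e a b : eqv a b -> evalT e a = evalT e b.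
Proof.
elim => /=; intros; try congruence;
  rewrite /madd /mscale /mbr /mzero /=; try (congr M4; ring);
  case: (evalT e _) => ???? /=; by rewrite ?add0r ?mul1r.
Qed.
End Model.


Section Steps.
Variables (k : fieldType).

Lemma sum_dl N (F : 'I_N -> k) p : \sum_w F w * (w == p)%:R = F p.
Proof.
rewrite (bigD1 p) //= eqxx mulr1 big1 ?addr0 // => w /negPf ->; by rewrite mulr0.
Qed.
Lemma sumdd N (F : 'I_N -> k) p q a b :
  \sum_w F w * ((w == p)%:R * a - (w == q)%:R * b) = F p * a - F q * b.
Proof.
under eq_bigr do rewrite mulrBr !mulrA.
rewrite sumrB -!mulr_suml !sum_dl //.
Qed.

Lemma linT_lsum r n (u : 'I_n -> k) (x : 'I_n -> lterm k 'I_r) w :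
  linT w (lsum [seq LScale (u i) (x i) | i <- enum 'I_n]) = \sum_i u i * linT w (x i).
Proof.
rewrite -big_enum /=; elim: (enum 'I_n) => [|i s IH] /=; first by rewrite big_nil.
by rewrite big_cons IH.
Qed.

Lemma pi_lsumS r n (u : 'I_n -> k) (x : 'I_n -> lterm k 'I_r) :
  pi (lsum [seq LScale (u i) (x i) | i <- enum 'I_n]) = \sum_i u i *: pi (x i).
Proof.
rewrite pi_lsum big_map -big_enum /=; apply: eq_bigr => i _; exact: piZ.
Qed.

Lemma stepPhi r n (x : 'I_n -> lterm k 'I_r) : phiF x ->
  forall u : 'I_n -> k, (forall w, \sum_i u i * linT w (x i) = 0) -> forall i, u i = 0.
Proof.
move=> hphi u hu i; apply/eqP; apply/negP => /negP hi.
apply: (hphi u); first by exists i.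
move=> w; apply/pi_eq; rewrite pi_br pi_br pi0; apply: metab; first exact: sq_br.
apply: sq_lin0 => w'; rewrite linL_pi linT_lsum; exact: hu.
Qed.

Lemma sum_dl2 N (F : 'I_N -> k) p : \sum_w (p == w)%:R * F w = F p.
Proof.
rewrite -[RHS](sum_dl F p); apply: eq_bigr => w _; by rewrite mulrC eq_sym.
Qed.

Lemma evalT_lin r (e : 'I_r -> m4 k) t :
  c1 (evalT e t) = \sum_w linT w t * c1 (e w) /\
  c2 (evalT e t) = \sum_w linT w t * c2 (e w).
Proof.
elim: t => [v||a [IHa1 IHa2] b [IHb1 IHb2]|c a [IH1 IH2]|a _ b _] /=.
- by rewrite !sum_dl2.
- by split; rewrite big1 // => w _; rewrite mul0r.
- rewrite IHa1 IHa2 IHb1 IHb2 -!big_split /=.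
  by split; apply: eq_bigr => w _; rewrite mulrDl.
- rewrite IH1 IH2 !mulr_sumr; by split; apply: eq_bigr => w _; rewrite mulrA.
- by split; rewrite big1 // => w _; rewrite mul0r.
Qed.
End Steps.

Section S3.
Variables (k : fieldType).

Lemma sumdd' N (F : 'I_N -> k) p q a b :
  \sum_w ((w == p)%:R * a - (w == q)%:R * b) * F w = a * F p - b * F q.
Proof.
under eq_bigr do rewrite mulrC.
by rewrite sumdd mulrC [F q * _]mulrC.
Qed.

Lemma stepA r n (hn2 : (2 <= n)%N) (x : 'I_n -> lterm k 'I_r)
  (hker : forall u : 'I_n -> k, (forall w, \sum_i u i * linT w (x i) = 0) -> forall i, u i = 0)
  (y : lterm k 'I_r) (hyx : forall i, eqv (LBr (LBr y (x i)) y) LZero) :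
  forall w, linT w y = 0.
Proof.
move=> w0; apply/eqP; apply/negP => /negP hb.
set b := fun w => linT w y.
set A := fun i w => linT w (x i).
have [hex|hnex] := boolP [exists i, [exists p, [exists q, b p * A i q - b q * A i p != 0]]].
  move/existsP: hex => [i /existsP [p /existsP [q hD]]].
  set D := b p * A i q - b q * A i p in hD.
  pose lam w := (w == p)%:R * (A i q / D) - (w == q)%:R * (A i p / D).
  pose mu w := (w == q)%:R * (b p / D) - (w == p)%:R * (b q / D).
  pose e w := M4 (lam w) (mu w) 0 0.
  have := congr1 (@c4 k) (evalT_eqv e (hyx i)).
  rewrite /= /mbr /=.
  have [Y1 Y2] := evalT_lin e y; have [X1 X2] := evalT_lin e (x i).
  rewrite Y1 Y2 X1 X2 /e /= !sumdd.
  rewrite -/(b p) -/(b q) -/(A i p) -/(A i q).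
  have e1 : b p * (A i q / D) - b q * (A i p / D) = 1.
    by rewrite !mulrA -mulrBl divff.
  have e2 : b q * (b p / D) - b p * (b q / D) = 0.
    by rewrite !mulrA [b q * b p]mulrC subrr.
  have e3 : A i p * (A i q / D) - A i q * (A i p / D) = 0.
    by rewrite !mulrA [A i p * A i q]mulrC subrr.
  have e4 : A i q * (b p / D) - A i p * (b q / D) = 1.
    by rewrite !mulrA -mulrBl [A i q * b p]mulrC [A i p * b q]mulrC divff.
  rewrite e1 e2 e3 e4 !mul0r !mulr1 !subr0 => /eqP; by rewrite oner_eq0.
have i0lt : (0 < n)%N by apply: leq_trans hn2.
pose i0 := Ordinal i0lt; pose i1 := Ordinal hn2.
have hprop : forall i q, A i q = b q * (A i w0 / b w0).
  move=> i q; move/existsPn: hnex => /(_ i) /existsPn /(_ w0) /existsPn /(_ q).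
  rewrite negbK subr_eq0 => /eqP h.
  by rewrite mulrA -h mulrC mulrA mulVf // mul1r.
set c := fun i => A i w0 / b w0 in hprop.
have ne01 : (i1 == i0) = false by [].
have hc0 : c i0 = 0.
  have h := hker (fun i => (i == i0)%:R * c i1 - (i == i1)%:R * c i0).
  have {h} := h _ i1; rewrite ne01 eqxx mul0r mul1r sub0r => h.
  apply/eqP; rewrite -oppr_eq0; apply/eqP; apply: h => w.
  rewrite sumdd' -/(A i0 w) -/(A i1 w) (hprop i0 w) (hprop i1 w).
  by rewrite /c; ring.
have h := hker (fun i => (i == i0)%:R).
have {h} := h _ i0; rewrite eqxx => h.
have : (1 : k) = 0.
  apply: h => w; under eq_bigr do rewrite mulrC; rewrite sum_dl -/(A i0 w) (hprop i0 w); move: hc0; rewrite /c => ->; by rewrite mulr0.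
by move/eqP; rewrite oner_eq0.
Qed.
End S3.

Arguments gen {k n}.
Arguments actG {k n}.
Arguments gg {k n}.
Arguments GF {k n}.
Section Core.
Variables (k : fieldType) (n : nat).
Local Notation L := (LL k 'I_n).
Local Notation K := (n * n)%N.
Variables (X : 'I_n -> L) (hX : forall i, sqP (X i - gen i)).
Local Notation tau := (homL X).
Local Notation GG := (@gg k n).

Local Notation ev := (meval (fun _ : 'I_n => (0 : k))).

Lemma tau_act u p : sqP u -> tau (actG u p) = actG (tau u) p.
Proof.
move=> hu; rewrite /actG hom_act; apply: act_sqdiff; last exact: hom_sq.
by move=> i; rewrite homV.
Qed.

Lemma gg_delta (j : 'I_K.+1) : GG j = \sum_l actG (GG l) (j == l)%:R.
Proof.
rewrite (bigD1 j) //= eqxx /actG act1 big1 ?addr0 // => i /negPf.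
by rewrite eq_sym => ->; rewrite act0p.
Qed.

Lemma gg_cases (j : 'I_K.+1) : GG j = 0 \/ exists a b, GG j = lbr (gen a) (gen b).
Proof.
rewrite /gg; case: insub => [a|]; last by left.
case: insub => [b|]; last by left.
by right; exists a, b.
Qed.

Lemma tau_gg (j : 'I_K.+1) : exists row : 'I_K.+1 -> {mpoly k[n]},
  tau (GG j) = \sum_l actG (GG l) (row l) /\ forall l, ev (row l) = (j == l)%:R.
Proof.
have hev : forall l, ev (j == l)%:R = (j == l)%:R by move=> l; rewrite rmorph_nat.
have hgen : forall a b, GG j = lbr (gen a) (gen b) -> exists row : 'I_K.+1 -> {mpoly k[n]},
   tau (GG j) = \sum_l actG (GG l) (row l) /\ forall l, ev (row l) = (j == l)%:R.
  move=> a b hj.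
  have [Za eZa] := sq_GF (hX a); have [Zb eZb] := sq_GF (hX b).
  exists (fun l => (j == l)%:R - Zb l * 'X_a + Za l * 'X_b); split; last first.
    move=> l; rewrite rmorphD rmorphB !rmorphM /= !mevalXU !mulr0 subr0 addr0.
    exact: hev.
  rewrite hj homBr !homV.
  have -> : lbr (X a) (X b) = lbr (gen a + (X a - gen a)) (gen b + (X b - gen b)).
    by rewrite [gen a + _]addrC subrK [gen b + _]addrC subrK.
  move: (X a - gen a) (X b - gen b) (hX a) (hX b) eZa eZb => za zb hza hzb eZa eZb.
  rewrite brDl !brDr (metab hza hzb) addr0 -hj.
  rewrite (brC (gen a)) -!actX1 -/(actG _ _) -/(actG _ _) eZa eZb /actG !act_sumu.
  rewrite gg_delta /actG -sumrN -!big_split /=; apply: eq_bigr => l _.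
  rewrite !act_mul; try exact: gg_sq.
  by rewrite actDp actBp.
have h0 : GG j = 0 -> exists row : 'I_K.+1 -> {mpoly k[n]},
   tau (GG j) = \sum_l actG (GG l) (row l) /\ forall l, ev (row l) = (j == l)%:R.
  move=> hj; exists (fun l => (j == l)%:R); split => //.
  by rewrite -gg_delta hj hom0.
have [h|[a [b h]]] := gg_cases j; [exact: h0 | exact: hgen a b h].
Qed.

Variables (m l : nat) (f : 'I_m -> 'I_l -> {mpoly k[n]}).

Definition Nset (w : 'I_m -> L) := exists u : 'I_l -> L, (forall j, sqP (u j)) /\
  forall i, w i = \sum_(j <- enum 'I_l) actG (u j) (f i j).

Lemma N0 : Nset (fun _ => 0).
Proof.
exists (fun _ => 0); split => [j|i]; first exact: sq0.
by rewrite big1 // => j _; rewrite /actG act0u.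
Qed.
Lemma ND w1 w2 : Nset w1 -> Nset w2 -> Nset (fun i => w1 i + w2 i).
Proof.
move=> [u1 [h1 e1]] [u2 [h2 e2]]; exists (fun j => u1 j + u2 j); split.
  by move=> j; apply: sqD.
by move=> i; rewrite e1 e2 -big_split; apply: eq_bigr => j _; rewrite /actG actDu.
Qed.
Lemma Nact w p : Nset w -> Nset (fun i => actG (w i) p).
Proof.
move=> [u [h e]]; exists (fun j => actG (u j) p); split.
  by move=> j; apply: act_sq.
move=> i; rewrite e /actG act_sumu; apply: eq_bigr => j _.
by rewrite !act_mul ?h // mulrC.
Qed.
Lemma Ntau w : Nset w -> Nset (fun i => tau (w i)).
Proof.
move=> [u [h e]]; exists (fun j => tau (u j)); split.
  by move=> j; apply: hom_sq.
by move=> i; rewrite e hom_sum; apply: eq_bigr => j _; rewrite tau_act.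
Qed.
Lemma Next w1 w2 : (forall i, w1 i = w2 i) -> Nset w1 -> Nset w2.
Proof. by move=> e; have -> : w1 = w2 by apply: funext. Qed.

Definition vec (Q : 'M[{mpoly k[n]}]_(m, K.+1)) i := \sum_j actG (GG j) (Q i j).

Lemma vecD Q1 Q2 i : vec (Q1 + Q2) i = vec Q1 i + vec Q2 i.
Proof. by rewrite /vec -big_split; apply: eq_bigr => j _; rewrite mxE /actG actDp. Qed.
Lemma vecZ p Q i : vec (p *: Q) i = actG (vec Q i) p.
Proof.
rewrite /vec /actG act_sumu; apply: eq_bigr => j _.
rewrite mxE act_mul; [by rewrite mulrC | exact: gg_sq].
Qed.
Lemma vec0 i : vec 0 i = 0.
Proof. by rewrite /vec big1 // => j _; rewrite mxE /actG act0p. Qed.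

Lemma core_main (c : 'I_m -> L) (hc : forall i, sqP (c i))
  (hN : Nset (fun i => tau (c i))) :
  exists s, ev s != 0 /\ Nset (fun i => actG (c i) s).
Proof.
have /choice [Mf hM] := tau_gg.
pose M := \matrix_(j, l) Mf j l : 'M[{mpoly k[n]}]_(K.+1).
have /choice [Pf hP] : forall i, exists P : 'I_K.+1 -> {mpoly k[n]},
    c i = \sum_j actG (GG j) (P j) by move=> i; apply: sq_GF.
pose P0 := \matrix_(i, j) Pf i j : 'M[{mpoly k[n]}]_(m, K.+1).
have vecP0 : forall i, vec P0 i = c i.
  by move=> i; rewrite hP /vec; apply: eq_bigr => j _; rewrite mxE.
have vecM : forall Q i, vec (Q *m M) i = tau (vec Q i).
  move=> Q i; rewrite /vec hom_sum.
  have e : forall j, tau (actG (GG j) (Q i j)) =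
      \sum_l' actG (GG l') (Mf j l' * Q i j).
    move=> j; rewrite tau_act; last exact: gg_sq.
    rewrite (proj1 (hM j)) /actG act_sumu; apply: eq_bigr => l' _.
    rewrite act_mul //; exact: gg_sq.
  under [RHS]eq_bigr do rewrite e.
  rewrite exchange_big /=; apply: eq_bigr => j _.
  rewrite !mxE /actG act_sump; apply: eq_bigr => j' _.
  by rewrite mxE mulrC.
pose W Q := Nset (vec Q).
have W0 : W 0 by apply: (Next _ N0) => i; rewrite vec0.
have WD : forall Q1 Q2, W Q1 -> W Q2 -> W (Q1 + Q2).
  by move=> Q1 Q2 h1 h2; apply: (Next _ (ND h1 h2)) => i; rewrite vecD.
have WZ : forall p Q, W Q -> W (p *: Q).
  by move=> p Q h; apply: (Next _ (Nact p h)) => i; rewrite vecZ.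
have WM : forall Q, W Q -> W (Q *m M).
  by move=> Q h; apply: (Next _ (Ntau h)) => i; rewrite vecM.
have WPM : W (P0 *m M).
  by apply: (Next _ hN) => i; rewrite vecM vecP0.
have Wp : forall p, W (P0 *m horner_mx M p - p`_0 *: P0).
  elim/poly_ind => [|p a IH].
    by rewrite rmorph0 mulmx0 coef0 scale0r subrr.
  rewrite rmorphD rmorphM /= horner_mx_X horner_mx_C coefD coefMX coefC /= add0r.
  rewrite mulmxDr mul_mx_scalar addrK mulmxA.
  have -> : P0 *m horner_mx M p *m M =
     (P0 *m horner_mx M p - p`_0 *: P0) *m M + p`_0 *: (P0 *m M).
    by rewrite mulmxBl -scalemxAl subrK.
  by apply: WD; [apply: WM | apply: WZ].
have := Wp (char_poly M); rewrite Cayley_Hamilton mulmx0 sub0r => hW.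
have {hW} := WZ (-1) _ hW; rewrite scaleN1r opprK => hW.
exists (char_poly M)`_0; split.
  rewrite char_poly_det rmorphM rmorphXn rmorphN1 -det_map_mx.
  have -> : map_mx (meval (fun _ : 'I_n => (0 : k))) M = 1%:M.
    apply/matrixP => a b; rewrite !mxE (proj2 (hM a)) //.
  by rewrite det1 mulr1 signr_eq0.
by apply: (Next _ hW) => i; rewrite vecZ vecP0.
Qed.
End Core.

Arguments gen {k n}.
Arguments actG {k n}.
Arguments gg {k n}.
Arguments GF {k n}.
Arguments linL {k n}.

Section Final.
Variables (k : fieldType).

Lemma in_sq_pi V (t : lterm k V) : in_sq t <-> sqP (pi t).
Proof.
split.
  move=> [ps /pi_eq ->]; exists [seq (pi p.1, pi p.2) | p <- ps].
  by rewrite pi_lsum !big_map; apply: eq_bigr => p _; rewrite pi_br.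
move=> [ps e]; exists [seq (rep p.1, rep p.2) | p <- ps]; apply/pi_eq.
rewrite e pi_lsum !big_map; apply: eq_bigr => p _; by rewrite pi_br !repK.
Qed.

Lemma notDelta n (p : {mpoly k[n]}) : meval (fun _ => (0 : k)) p != 0 -> ~ in_Delta p.
Proof.
move=> hp [g eg]; move: hp; rewrite eg rmorph_sum big1 ?eqxx // => i _.
by rewrite rmorphM /= mevalXU mulr0.
Qed.

Lemma ev1 n : meval (fun _ : 'I_n => (0 : k)) 1 != 0.
Proof. by rewrite rmorph1 oner_eq0. Qed.

Lemma loc_from n l m (f : 'I_m -> 'I_l -> {mpoly k[n]}) (c : 'I_m -> lterm k 'I_n)
  (s : {mpoly k[n]}) (u : 'I_l -> LL k 'I_n) :
  meval (fun _ => (0 : k)) s != 0 -> (forall j, sqP (u j)) ->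
  (forall i, actG (pi (c i)) s = \sum_(j <- enum 'I_l) actG (u j) (f i j)) ->
  loc_solvable f c.
Proof.
move=> hs hu he; exists s, 1, (fun j => rep (u j)); split; first exact: notDelta.
split; first exact: notDelta (ev1 n).
split; first by move=> j; apply/in_sq_pi; rewrite repK.
move=> i; apply/pi_eq; rewrite pi_pact act1 pi_lsub pi_sys_lhs pi_pact pi0.
have := he i; rewrite /actG => ->.
apply/eqP; rewrite subr_eq0; apply/eqP; apply: eq_bigr => j _; by rewrite repK.
Qed.

End Final.

Arguments gen {k n}.
Arguments actG {k n}.
Arguments gg {k n}.
Arguments GF {k n}.
Arguments linL {k n}.

Lemma small_sq0 (k : fieldType) n (q : LL k 'I_n) : (n <= 1)%N -> sqP q -> q = 0.
Proof.
move=> hn /sq_GF [P ->]; rewrite big1 // => j _.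
have [->|[a [b ->]]] := @gg_cases k n j; first by rewrite /actG act0u.
have -> : b = a.
  apply/eqP; rewrite -val_eqE /=; move: (leq_trans (ltn_ord a) hn) (leq_trans (ltn_ord b) hn).
  by rewrite !ltnS !leqn0 => /eqP -> /eqP ->.
by rewrite brr /actG act0u.
Qed.

Theorem lemma3p10 (k : finFieldType) (r : nat) (hr : (2 <= r)%N)
  (n l m : nat) (hn : (n <= r)%N)
  (f : 'I_m -> 'I_l -> {mpoly k[n]}) (c : 'I_m -> lterm k 'I_n)
  (hc : forall i, in_sq (c i))
  (hS : ~ loc_solvable f c) :
  Phi7_sentence_holds r f c.
Proof.
move=> x y hphi hyx.
have [//|hno] := pselect (exists i, ~ eqv (lsub (sys_lhs f x y i) (lsubst x (c i))) LZero).
exfalso; apply: hS.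
have hall : forall i, eqv (lsub (sys_lhs f x y i) (lsubst x (c i))) LZero.
  by move=> i; apply: contrapT => h; apply: hno; exists i.
have hc' : forall i, sqP (pi (c i)) by move=> i; apply/in_sq_pi.
case: (leqP n 1) => hn1.
  apply: (@loc_from _ _ _ _ f c 1 (fun _ => 0)); first exact: ev1.
    by move=> j; exact: sq0.
  move=> i; rewrite (small_sq0 hn1 (hc' i)) /actG act0u big1 // => j _.
  by rewrite act0u.
have hker := stepPhi hphi.
pose A := \matrix_(i, w) linT w (x i) : 'M[k]_(n, r).
have hfree : row_free A.
  rewrite -kermx_eq0; apply/eqP/row_matrixP => i; rewrite row0; apply/rowP => w.
  have hu : row i (kermx A) *m A = 0 by apply/sub_kermxP; exact: row_sub.
  rewrite [RHS]mxE; apply: (hker (fun i' => row i (kermx A) 0 i')).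
  move=> w'; have e := congr1 (fun M : 'M[k]_(1, r) => M 0 w') hu; rewrite !mxE in e.
  rewrite -[RHS]e; apply: eq_bigr => i' _; congr (_ * _); by rewrite /A mxE.
have [B hB] := row_freeP hfree.
pose phi := fun w : 'I_r => \sum_j B w j *: (gen j : LL k 'I_n).
pose Phi := homL phi.
pose X := fun i => Phi (pi (x i)).
have hX : forall i, sqP (X i - gen i).
  move=> i; have hz := GF_sq (nfL (pi (x i))).
  set z := _ - _ in hz.
  have -> : X i = \sum_w linL (pi (x i)) w *: phi w + Phi z.
    have ex : pi (x i) = \sum_w linL (pi (x i)) w *: gen w + z by rewrite /z addrC subrK.
    rewrite /X /Phi {1}ex homD hom_sum; congr (_ + _).
    by apply: eq_bigr => w _; rewrite homZ homV.
  suff -> : \sum_w linL (pi (x i)) w *: phi w = gen i.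
    by rewrite addrAC subrr add0r; apply: hom_sq.
  rewrite /phi; under eq_bigr do rewrite scaler_sumr.
  rewrite exchange_big /= -[RHS]sum_delta; apply: eq_bigr => j _.
  under eq_bigr do rewrite scalerA.
  rewrite -scaler_suml; congr (_ *: _).
  have e := congr1 (fun M : 'M[k]_n => M i j) hB; rewrite !mxE in e.
  rewrite -[RHS]e; apply: eq_bigr => w _; congr (_ * _); by rewrite linL_pi /A mxE.
have hy : forall j, sqP (pi (y j)).
  move=> j; apply: sq_lin0 => w; rewrite linL_pi.
  exact: (@stepA _ r n hn1 x hker (y j) (fun i => hyx j i)).
have hN : Nset f (fun i => homL X (pi (c i))).
  exists (fun j => Phi (pi (y j))); split; first by move=> j; apply: hom_sq.
  move=> i; have /pi_eq := hall i.
  rewrite pi_lsub pi_sys_lhs pi_subst pi0 => /eqP; rewrite subr_eq0 => /eqP e.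
  rewrite /X /Phi -hom_comp -e hom_sum; apply: eq_bigr => j _.
  rewrite hom_act /actG; apply: act_sqdiff; first exact: hX.
  exact: hom_sq.
have [s [hs [u [hu he]]]] := @core_main k n X hX m l f (fun i => pi (c i)) hc' hN.
exact: (loc_from hs hu he).
Qed.
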